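(* Let $\nu\in[0,1]$, let $\|u\|_C=[(1-\nu)\|u\|_1^2+\nu\|u\|_2^2]^{1/2}$ on $\mathbb{R}^N$ and $\|\cdot\|_R=\|\cdot\|_2$ on $\mathbb{R}^P$, and let $F(A)=(1-\nu)\sum_{i,j=1}^N|A_{ij}|+\nu\operatorname{tr}A$ for symmetric $A\in\mathbb{R}^{N\times N}$ (so that $F(uu^\top)=\|u\|_C^2$). Then for every $X\in\mathbb{R}^{N\times P}$, $$\|X\|_D\ \ge\ \inf\Big\{\tfrac12F(A)+\tfrac12\operatorname{tr}\big(X^\top A^{+}X\big)\;:\;A\in\mathbb{R}^{N\times N},\ A\succeq0,\ \operatorname{range}(X)\subseteq\operatorname{range}(A)\Big\},$$ where $A^+$ is the Moore–Penrose pseudo-inverse.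
   Context: For $M\ge 1$ and $X\in\mathbb{R}^{N\times P}$, $f_D^M(X)=\inf\{\tfrac12\sum_{m=1}^M(\|u_m\|_C^2+\|v_m\|_R^2): U=[u_1,\dots,u_M]\in\mathbb{R}^{N\times M}, V=[v_1,\dots,v_M]\in\mathbb{R}^{P\times M}, X=UV^\top\}$ (with $\inf\emptyset=+\infty$), and the decomposition norm is $\|X\|_D=\lim_{M\to\infty}f_D^M(X)$. *)

(* Defs.v *)
(* classical real numbers. Matrices are functions nat -> nat -> R,
   only the entries with indices in range (i < N, j < P) are ever inspected. *)
From Stdlib Require Import Reals Classical ClassicalEpsilon.
Open Scope R_scope.

Fixpoint fsum (n : nat) (f : nat -> R) : R :=
  match n with O => 0 | S k => fsum k f + f k end.

Definition vec := nat -> R.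
Definition mat := nat -> nat -> R.

Definition norm1 (N : nat) (u : vec) : R := fsum N (fun i => Rabs (u i)).
Definition norm2 (N : nat) (u : vec) : R := sqrt (fsum N (fun i => u i ^ 2)).

Definition normC (nu : R) (N : nat) (u : vec) : R :=
  sqrt ((1 - nu) * norm1 N u ^ 2 + nu * norm2 N u ^ 2).
Definition normR (P : nat) (v : vec) : R := norm2 P v.

Definition col (A : mat) (m : nat) : vec := fun i => A i m.

Definition decomp_value (nu : R) (N P M : nat) (X : mat) (v : R) : Prop :=
  exists U V : mat,
    (forall i j, (i < N)%nat -> (j < P)%nat ->
        X i j = fsum M (fun m => U i m * V j m)) /\
    v = / 2 * fsum M (fun m => normC nu N (col U m) ^ 2 + normR P (col V m) ^ 2).

Definition is_inf (S : R -> Prop) (m : R) : Prop :=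
  (forall x, S x -> m <= x) /\ (forall m', (forall x, S x -> m' <= x) -> m' <= m).

Definition Rinf (S : R -> Prop) : R := epsilon (inhabits 0) (is_inf S).

(* extended real infimum: None stands for +infinity (inf of the empty set) *)
Definition fD (nu : R) (N P M : nat) (X : mat) : option R :=
  epsilon (inhabits None) (fun o => match o with
    | None => ~ (exists v, decomp_value nu N P M X v)
    | Some m => (exists v, decomp_value nu N P M X v) /\ is_inf (decomp_value nu N P M X) m
    end).

Definition toR (o : option R) : R := match o with Some x => x | None => 0 end.

(* ||X||_D = lim_{M -> oo} f_D^M(X)  (the sequence is eventually finite) *)
Definition Dnorm (nu : R) (N P : nat) (X : mat) : R :=
  epsilon (inhabits 0) (fun d =>
    (exists M0, forall M, (M0 <= M)%nat -> fD nu N P M X <> None) /\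
    Un_cv (fun M => toR (fD nu N P M X)) d).

Definition mmul (N : nat) (A B : mat) : mat := fun i j => fsum N (fun k => A i k * B k j).
Definition mtr (A : mat) : mat := fun i j => A j i.
Definition meq (N : nat) (A B : mat) : Prop :=
  forall i j, (i < N)%nat -> (j < N)%nat -> A i j = B i j.

Definition symmetric (N : nat) (A : mat) : Prop := meq N A (mtr A).

Definition psd (N : nat) (A : mat) : Prop :=
  symmetric N A /\
  forall v : vec, 0 <= fsum N (fun i => fsum N (fun j => v i * A i j * v j)).

(* Moore-Penrose conditions; they characterize A^+ uniquely *)
Definition is_pinv (N : nat) (A B : mat) : Prop :=
  meq N (mmul N (mmul N A B) A) A /\
  meq N (mmul N (mmul N B A) B) B /\
  meq N (mtr (mmul N A B)) (mmul N A B) /\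
  meq N (mtr (mmul N B A)) (mmul N B A).

Definition pinv (N : nat) (A : mat) : mat := epsilon (inhabits (fun _ _ => 0)) (is_pinv N A).

Definition range_incl (N P : nat) (X A : mat) : Prop :=
  forall w : vec, exists z : vec, forall i, (i < N)%nat ->
    fsum P (fun j => X i j * w j) = fsum N (fun k => A i k * z k).

Definition trace (N : nat) (A : mat) : R := fsum N (fun i => A i i).

Definition Ffun (nu : R) (N : nat) (A : mat) : R :=
  (1 - nu) * fsum N (fun i => fsum N (fun j => Rabs (A i j))) + nu * trace N A.

Definition trXtBX (N P : nat) (X B : mat) : R :=
  fsum P (fun p => fsum N (fun i => fsum N (fun k => X i p * B i k * X k p))).

(* Main.v *)
Require Import Defs.
From Stdlib Require Import Reals.
Open Scope R_scope.
From Stdlib Require Import Lra Lia Classical ClassicalEpsilon FunctionalExtensionality PropExtensionality.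

Lemma fsum_ext n f g : (forall i, (i < n)%nat -> f i = g i) -> fsum n f = fsum n g.
Proof.
induction n as [|n IH]; intros h; simpl; auto.
rewrite IH by (intros; apply h; lia). rewrite (h n) by lia. reflexivity.
Qed.

Lemma fsum_plus n f g : fsum n (fun i => f i + g i) = fsum n f + fsum n g.
Proof. induction n as [|n IH]; simpl; [ring| rewrite IH; ring]. Qed.

Lemma fsum_scal n c f : fsum n (fun i => c * f i) = c * fsum n f.
Proof. induction n as [|n IH]; simpl; [ring| rewrite IH; ring]. Qed.

Lemma fsum_scal_r n c f : fsum n (fun i => f i * c) = fsum n f * c.
Proof. induction n as [|n IH]; simpl; [ring| rewrite IH; ring]. Qed.

Lemma fsum_zero n : fsum n (fun _ => 0) = 0.
Proof. induction n as [|n IH]; simpl; [ring| rewrite IH; ring]. Qed.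

Lemma fsum_nonneg n f : (forall i, (i < n)%nat -> 0 <= f i) -> 0 <= fsum n f.
Proof.
induction n as [|n IH]; intros h; simpl; [lra|].
assert (0 <= fsum n f) by (apply IH; intros; apply h; lia).
assert (0 <= f n) by (apply h; lia). lra.
Qed.

Lemma fsum_le n f g : (forall i, (i < n)%nat -> f i <= g i) -> fsum n f <= fsum n g.
Proof.
induction n as [|n IH]; intros h; simpl; [lra|].
assert (fsum n f <= fsum n g) by (apply IH; intros; apply h; lia).
assert (f n <= g n) by (apply h; lia). lra.
Qed.

Lemma fsum_abs n f : Rabs (fsum n f) <= fsum n (fun i => Rabs (f i)).
Proof.
induction n as [|n IH]; simpl; [rewrite Rabs_R0; lra|].
eapply Rle_trans; [apply Rabs_triang|]. lra.
Qed.

Lemma fsum_swap n m (f : nat -> nat -> R) :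
  fsum n (fun i => fsum m (fun j => f i j)) = fsum m (fun j => fsum n (fun i => f i j)).
Proof.
induction n as [|n IH]; simpl.
- symmetry; apply fsum_zero.
- rewrite IH. rewrite <- fsum_plus. reflexivity.
Qed.

Definition ev (k : nat) : vec := fun j => if Nat.eqb j k then 1 else 0.

Lemma fsum_ev_r n k f : (k < n)%nat -> fsum n (fun j => f j * ev k j) = f k.
Proof.
induction n as [|n IH]; intros hk; [lia|]. simpl.
unfold ev at 2. destruct (Nat.eqb n k) eqn:E.
- apply Nat.eqb_eq in E; subst.
  rewrite (fsum_ext _ _ (fun _ => 0)). rewrite fsum_zero; ring.
  intros i hi. unfold ev. destruct (Nat.eqb i k) eqn:E2; [apply Nat.eqb_eq in E2; lia| ring].
- apply Nat.eqb_neq in E. rewrite IH by lia. ring.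
Qed.

Lemma fsum_ev_l n k f : (k < n)%nat -> fsum n (fun j => ev k j * f j) = f k.
Proof.
intros hk. rewrite <- (fsum_ev_r n k f hk). apply fsum_ext; intros; ring.
Qed.

Lemma fsum_sq_nonneg n f : 0 <= fsum n (fun i => f i ^ 2).
Proof. apply fsum_nonneg; intros; apply pow2_ge_0. Qed.

Lemma inf_exists (S : R -> Prop) :
  (exists x, S x) -> (exists l, forall x, S x -> l <= x) -> exists m, is_inf S m.
Proof.
intros [x0 hx0] [l hl].
set (T := fun y => forall x, S x -> y <= x).
assert (hb : bound T) by (exists x0; intros y hy; apply hy; auto).
assert (hne : exists y, T y) by (exists l; exact hl).
destruct (completeness T hb hne) as [m [hm1 hm2]].
exists m. split.
- intros x hx. apply hm2. intros y hy. apply hy; auto.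
- intros m' hm'. apply hm1. exact hm'.
Qed.

Lemma is_inf_unique S a b : is_inf S a -> is_inf S b -> a = b.
Proof.
intros [h1 h2] [h3 h4]. apply Rle_antisym; [apply h4 | apply h2]; auto.
Qed.

Lemma Rinf_spec S : (exists x, S x) -> (exists l, forall x, S x -> l <= x) -> is_inf S (Rinf S).
Proof.
intros h1 h2. destruct (inf_exists S h1 h2) as [m hm].
unfold Rinf. apply epsilon_spec. exists m; exact hm.
Qed.

Lemma decomp_nonneg nu N P M X v : decomp_value nu N P M X v -> 0 <= v.
Proof.
intros [U [V [_ ->]]].
apply Rmult_le_pos; [lra|]. apply fsum_nonneg; intros.
assert (0 <= normC nu N (col U i) ^ 2) by apply pow2_ge_0.
assert (0 <= normR P (col V i) ^ 2) by apply pow2_ge_0. lra.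
Qed.

Lemma decomp_exists nu N P M X : (N <= M)%nat -> exists v, decomp_value nu N P M X v.
Proof.
intros hNM. eexists. exists (fun i m => ev m i), (fun j m => X m j). split; [|reflexivity].
intros i j hi hj.
transitivity (fsum M (fun m => ev i m * X m j)).
- symmetry; apply (fsum_ev_l M i (fun m => X m j)); lia.
- apply fsum_ext. intros m hm. unfold ev. destruct (Nat.eqb i m) eqn:E1; destruct (Nat.eqb m i) eqn:E2;
  try reflexivity; apply Nat.eqb_eq in E1 || apply Nat.eqb_eq in E2;
  [apply Nat.eqb_neq in E2 | apply Nat.eqb_neq in E1]; lia.
Qed.

Lemma norm_zero_col nu N (U : mat) M : normC nu N (col (fun i m => if Nat.eqb m M then 0 else U i m) M) = 0.
Proof.
unfold normC, norm1, norm2, col. rewrite Nat.eqb_refl.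
rewrite (fsum_ext _ _ (fun _ => 0)) by (intros; rewrite Rabs_R0; reflexivity).
rewrite (fsum_ext N (fun i => 0 ^ 2) (fun _ => 0)) by (intros; ring).
rewrite fsum_zero, sqrt_0. replace ((1 - nu) * 0 ^ 2 + nu * 0 ^ 2) with 0 by ring.
apply sqrt_0.
Qed.

Lemma decomp_mono nu N P M X v : decomp_value nu N P M X v -> decomp_value nu N P (S M) X v.
Proof.
intros [U [V [hX hv]]].
exists (fun i m => if Nat.eqb m M then 0 else U i m), (fun j m => if Nat.eqb m M then 0 else V j m).
split.
- intros i j hi hj. rewrite hX by auto. simpl. rewrite Nat.eqb_refl.
  rewrite Rmult_0_l, Rplus_0_r. apply fsum_ext; intros m hm.
  destruct (Nat.eqb m M) eqn:E; [apply Nat.eqb_eq in E; lia| reflexivity].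
- rewrite hv. cbn [fsum]. rewrite norm_zero_col.
  replace (normR P (col (fun j m => if Nat.eqb m M then 0 else V j m) M)) with 0.
  + f_equal. symmetry. rewrite (fsum_ext M _ (fun m => normC nu N (col U m) ^ 2 + normR P (col V m) ^ 2)).
    * ring.
    * intros m hm. unfold col. destruct (Nat.eqb m M) eqn:E; [apply Nat.eqb_eq in E; lia|].
      reflexivity.
  + symmetry. unfold normR, norm2, col. rewrite Nat.eqb_refl.
    rewrite (fsum_ext P (fun i => 0 ^ 2) (fun _ => 0)) by (intros; ring).
    rewrite fsum_zero; apply sqrt_0.
Qed.

Lemma fD_some nu N P M X : (exists v, decomp_value nu N P M X v) ->
  exists m, fD nu N P M X = Some m /\ is_inf (decomp_value nu N P M X) m.
Proof.
intros hex.
destruct (inf_exists _ hex) as [m hm].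
{ exists 0. intros; eapply decomp_nonneg; eauto. }
assert (hs := epsilon_spec (inhabits None) (fun o => match o with
    | None => ~ (exists v, decomp_value nu N P M X v)
    | Some m => (exists v, decomp_value nu N P M X v) /\ is_inf (decomp_value nu N P M X) m
    end) (ex_intro _ (Some m) (conj hex hm))).
unfold fD. destruct (epsilon _ _) as [m'|].
- exists m'. split; [reflexivity| apply hs].
- exfalso; apply hs; exact hex.
Qed.

Lemma Dnorm_ge nu N P X L :
  (forall M v, decomp_value nu N P M X v -> L <= v) -> L <= Dnorm nu N P X.
Proof.
intros hL.
set (a := fun M => toR (fD nu N P M X)).
assert (hsome : forall M, (N <= M)%nat -> exists m, fD nu N P M X = Some m /\
    is_inf (decomp_value nu N P M X) m) by (intros; apply fD_some, decomp_exists; auto).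
assert (haL : forall M, (N <= M)%nat -> L <= a M).
{ intros M hM. destruct (hsome M hM) as [m [e [_ hm]]]. unfold a; rewrite e. simpl.
  apply hm. intros; eapply hL; eauto. }
assert (ha0 : forall M, (N <= M)%nat -> 0 <= a M).
{ intros M hM. destruct (hsome M hM) as [m [e [_ hm]]]. unfold a; rewrite e. simpl.
  apply hm. intros; eapply decomp_nonneg; eauto. }
assert (hdec : forall M, (N <= M)%nat -> a (S M) <= a M).
{ intros M hM. destruct (hsome M hM) as [m [e [_ hm]]].
  destruct (hsome (S M) ltac:(lia)) as [m' [e' [hm' _]]]. unfold a; rewrite e, e'; simpl.
  apply hm. intros v hv. apply hm'. apply decomp_mono; auto. }
set (b := fun k => a (N + k)%nat).
assert (hb1 : Un_decreasing b).
{ intros k. unfold b. replace (N + S k)%nat with (S (N + k)) by lia. apply hdec; lia. }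
assert (hb2 : has_lb b).
{ exists 0. intros x [i ->]. unfold opp_seq. assert (0 <= b i) by (apply ha0; lia). lra. }
destruct (decreasing_cv b hb1 hb2) as [l hl].
assert (hal : Un_cv a l).
{ intros eps heps. destruct (hl eps heps) as [K hK]. exists (N + K)%nat. intros n hn.
  replace n with (N + (n - N))%nat by lia. apply (hK (n - N)%nat). lia. }
assert (hspec : (exists M0, forall M, (M0 <= M)%nat -> fD nu N P M X <> None) /\ Un_cv a l).
{ split; [|exact hal]. exists N. intros M hM. destruct (hsome M hM) as [m [e _]].
  rewrite e; discriminate. }
assert (hd := epsilon_spec (inhabits 0) (fun d =>
    (exists M0, forall M, (M0 <= M)%nat -> fD nu N P M X <> None) /\
    Un_cv (fun M => toR (fD nu N P M X)) d) (ex_intro _ l hspec)).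
unfold Dnorm. set (d := epsilon _ _) in *.
destruct hd as [_ hd].
destruct (Rle_or_lt L d) as [h|h]; [exact h|exfalso].
destruct (hd (L - d)) as [K hK]; [lra|].
assert (h1 := hK (N + K)%nat ltac:(lia)).
assert (h2 := haL (N + K)%nat ltac:(lia)).
unfold Rdist in h1. unfold a in h2.
apply Rabs_def2 in h1. lra.
Qed.

Lemma psd_diag N A k : psd N A -> (k < N)%nat -> 0 <= A k k.
Proof.
intros [_ h] hk. specialize (h (ev k)).
rewrite (fsum_ext N _ (fun i => ev k i * A i k)) in h.
- rewrite (fsum_ev_l N k (fun i => A i k)) in h by exact hk. exact h.
- intros i hi. apply (fsum_ev_r N k (fun j => ev k i * A i j)). exact hk.
Qed.

Lemma F_nonneg nu N A : 0 <= nu <= 1 -> psd N A -> 0 <= Ffun nu N A.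
Proof.
intros hnu hA. unfold Ffun, trace.
assert (0 <= fsum N (fun i => fsum N (fun j => Rabs (A i j)))).
{ apply fsum_nonneg; intros; apply fsum_nonneg; intros; apply Rabs_pos. }
assert (0 <= fsum N (fun i => A i i)) by (apply fsum_nonneg; intros; eapply psd_diag; eauto).
assert (0 <= 1 - nu) by lra.
assert (0 <= (1 - nu) * fsum N (fun i => fsum N (fun j => Rabs (A i j)))) by (apply Rmult_le_pos; auto).
assert (0 <= nu * fsum N (fun i => A i i)) by (apply Rmult_le_pos; lra).
lra.
Qed.

Lemma sq_fsum n f : fsum n f ^ 2 = fsum n (fun i => fsum n (fun j => f i * f j)).
Proof.
replace (fsum n f ^ 2) with (fsum n f * fsum n f) by ring.
rewrite <- fsum_scal_r. apply fsum_ext; intros i hi. rewrite <- fsum_scal. reflexivity.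
Qed.

Lemma normC_sq nu N u : 0 <= nu <= 1 ->
  normC nu N u ^ 2 = (1 - nu) * fsum N (fun i => fsum N (fun j => Rabs (u i) * Rabs (u j)))
                     + nu * fsum N (fun i => u i ^ 2).
Proof.
intros hnu. unfold normC.
assert (h2 : 0 <= fsum N (fun i => u i ^ 2)) by apply fsum_sq_nonneg.
assert (e2 : norm2 N u ^ 2 = fsum N (fun i => u i ^ 2)) by (unfold norm2; apply pow2_sqrt; auto).
rewrite pow2_sqrt.
- rewrite e2. unfold norm1. rewrite sq_fsum. reflexivity.
- rewrite e2. assert (0 <= norm1 N u ^ 2) by apply pow2_ge_0.
  assert (0 <= (1 - nu) * norm1 N u ^ 2) by (apply Rmult_le_pos; lra).
  assert (0 <= nu * fsum N (fun i => u i ^ 2)) by (apply Rmult_le_pos; lra). lra.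
Qed.

Definition gram (M : nat) (U : mat) : mat := fun i k => fsum M (fun m => U i m * U k m).

Lemma F_bound nu N M U : 0 <= nu <= 1 ->
  Ffun nu N (gram M U) <= fsum M (fun m => normC nu N (col U m) ^ 2).
Proof.
intros hnu.
rewrite (fsum_ext M _ (fun m => (1 - nu) * fsum N (fun i => fsum N (fun j => Rabs (U i m) * Rabs (U j m)))
                     + nu * fsum N (fun i => U i m ^ 2))).
2: { intros m hm. rewrite normC_sq by auto. reflexivity. }
rewrite fsum_plus, !fsum_scal. unfold Ffun, trace, gram.
apply Rplus_le_compat.
- apply Rmult_le_compat_l; [lra|].
  rewrite (fsum_swap M N). apply fsum_le; intros i hi. rewrite (fsum_swap M N).
  apply fsum_le; intros j hj. eapply Rle_trans; [apply fsum_abs|].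
  apply fsum_le; intros m hm. rewrite Rabs_mult. lra.
- right. f_equal. rewrite fsum_swap. apply fsum_ext; intros; apply fsum_ext; intros. ring.
Qed.

Lemma normR_sum P M (V : mat) :
  fsum M (fun m => normR P (col V m) ^ 2) = fsum P (fun p => fsum M (fun m => V p m ^ 2)).
Proof.
rewrite fsum_swap. apply fsum_ext; intros m hm. unfold normR, norm2, col.
apply pow2_sqrt. apply fsum_sq_nonneg.
Qed.

Lemma gram_sym M N U : symmetric N (gram M U).
Proof. intros i j _ _. unfold gram, mtr. apply fsum_ext; intros; ring. Qed.

Set Warnings "-notation-overridden,-ambiguous-paths,-redundant-canonical-projection".
From HB Require Import structures.
From mathcomp Require Import all_boot all_algebra.
Open Scope R_scope.
Delimit Scope R_scope with Re.

Definition Req_bool (x y : R) : bool := if Req_EM_T x y then true else false.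
Lemma Req_boolP : Equality.axiom Req_bool.
Proof. move=> x y; rewrite /Req_bool; case: Req_EM_T => h; by constructor. Qed.
HB.instance Definition _ := hasDecEq.Build R Req_boolP.

Definition Rfind (P : pred R) (n : nat) : option R :=
  match excluded_middle_informative (exists x, P x) with
  | left h => Some (proj1_sig (constructive_indefinite_description _ h))
  | right _ => None end.
Lemma Rfind_correct P n x : Rfind P n = Some x -> P x.
Proof. rewrite /Rfind; case: excluded_middle_informative => // h [<-].
by case: constructive_indefinite_description. Qed.
Lemma Rfind_complete (P : pred R) : (exists x, P x) -> exists n, Rfind P n.
Proof. move=> h; exists 0%nat; rewrite /Rfind; case: excluded_middle_informative => //. Qed.
Lemma Rfind_ext (P Q : pred R) : P =1 Q -> Rfind P =1 Rfind Q.
Proof. move=> h; have -> : P = Q by apply: functional_extensionality. by []. Qed.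
HB.instance Definition _ := hasChoice.Build R Rfind_correct Rfind_complete Rfind_ext.

Lemma R_addA : associative Rplus. Proof. move=> *; ring. Qed.
Lemma R_addC : commutative Rplus. Proof. move=> *; ring. Qed.
Lemma R_add0 : left_id 0 Rplus. Proof. move=> *; ring. Qed.
Lemma R_addN : left_inverse 0 Ropp Rplus. Proof. move=> *; ring. Qed.
HB.instance Definition _ := GRing.isZmodule.Build R R_addA R_addC R_add0 R_addN.
Lemma R_mulA : associative Rmult. Proof. move=> *; ring. Qed.
Lemma R_mulC : commutative Rmult. Proof. move=> *; ring. Qed.
Lemma R_mul1 : left_id 1 Rmult. Proof. move=> *; ring. Qed.
Lemma R_mulD : left_distributive Rmult Rplus. Proof. move=> *; ring. Qed.
Lemma R_1n0 : (1 : R) != 0. Proof. by apply/Req_boolP; exact R1_neq_R0. Qed.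
HB.instance Definition _ := GRing.Zmodule_isComNzRing.Build R R_mulA R_mulC R_mul1 R_mulD R_1n0.
Lemma R_mulV (x : R) : x != 0 -> Rinv x * x = 1.
Proof. move/Req_boolP=> h; exact: Rinv_l. Qed.
Lemma R_inv0 : Rinv 0 = 0. Proof. exact Rinv_0. Qed.
HB.instance Definition _ := GRing.ComNzRing_isField.Build R R_mulV R_inv0.


Section MX.
Local Open Scope ring_scope.

Definition tomx (m n : nat) (A : mat) : 'M[R]_(m, n) := \matrix_(i, j) A i j.
Definition frommx {m n : nat} (M : 'M[R]_(m, n)) : mat := fun i j =>
  match (insub i : option 'I_m), (insub j : option 'I_n) with
  | Some i', Some j' => M i' j' | _, _ => 0%R end.

Lemma tomx_from m n (M : 'M[R]_(m, n)) : tomx m n (frommx M) = M.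
Proof.
apply/matrixP => i j; rewrite /tomx /frommx mxE.
by rewrite !valK.
Qed.

Lemma fsum_big n f : fsum n f = \sum_(i < n) f i.
Proof.
elim: n => [|n IH] /=; first by rewrite big_ord0.
by rewrite big_ord_recr /= IH.
Qed.

Definition mmulg (n : nat) (A B : mat) : mat := fun i j => fsum n (fun k => A i k * B k j).

Lemma tomx_mul m n p (A B : mat) :
  tomx m p (mmulg n A B) = tomx m n A *m tomx n p B.
Proof.
apply/matrixP => i j; rewrite /tomx !mxE /mmulg fsum_big.
by apply: eq_bigr => k _; rewrite !mxE.
Qed.

Lemma tomx_tr n (A : mat) : tomx n n (mtr A) = (tomx n n A)^T.
Proof. by apply/matrixP => i j; rewrite !mxE. Qed.

Lemma meq_tomx n A B : meq n A B <-> tomx n n A = tomx n n B.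
Proof.
split.
  by move=> h; apply/matrixP => i j; rewrite !mxE; apply: h; apply/ltP.
move=> h i j hi hj.
by have := congr1 (fun M : 'M[R]_n => M (Ordinal (introT ltP hi)) (Ordinal (introT ltP hj))) h; rewrite !mxE.
Qed.

End MX.

Import GRing.Theory.
Section MP.
Local Open Scope ring_scope.

Lemma sum_nonneg (I : finType) (P : pred I) (F : I -> R) :
  (forall i, Rle 0%Re (F i)) -> Rle 0%Re (\sum_(i | P i) F i).
Proof.
move=> h; apply: (big_ind (fun x : R => Rle 0 x)) => //.
- exact: Rle_refl.
- move=> x y hx hy; change (Rle 0%Re (Rplus x y)); lra.
Qed.

Lemma mmT_eq0 m n (W : 'M[R]_(m, n)) : W *m W^T = 0 -> W = 0.
Proof.
move=> h; apply/matrixP => i j.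
have := congr1 (fun M : 'M[R]_m => M i i) h; rewrite !mxE (bigD1 j) //=.
rewrite mxE => H1.
have H0 : Rle 0%Re (\sum_(k | k != j) W i k * W^T k i).
  by apply: sum_nonneg => k; rewrite mxE; apply: Rle_0_sqr.
have h2 : Rle 0%Re (Rmult (W i j) (W i j)) by apply: Rle_0_sqr.
change (Rplus (Rmult (W i j) (W i j)) (\sum_(k | k != j) (W i k * W^T k i)) = 0%Re) in H1.
have h3 : (Rmult (W i j) (W i j) = 0)%Re by move: H0 H1 h2; lra.
by case: (Rmult_integral _ _ h3).
Qed.

Lemma cancel_l {n m} {A : 'M[R]_n} {W : 'M[R]_(n, m)} :
  A^T = A -> A *m (A *m W) = 0 -> A *m W = 0.
Proof.
move=> hA h; apply: trmx_inj; rewrite trmx0; apply: mmT_eq0.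
by rewrite trmxK trmx_mul hA -mulmxA h mulmx0.
Qed.

Lemma cancel_r {n m} {A : 'M[R]_n} {W : 'M[R]_(m, n)} :
  A^T = A -> W *m A *m A = 0 -> W *m A = 0.
Proof.
move=> hA h; apply: mmT_eq0.
by rewrite trmx_mul hA mulmxA h mul0mx.
Qed.

Lemma ginv_l {n} {A G : 'M[R]_n} : A^T = A -> (A *m A) *m G *m (A *m A) = A *m A ->
  forall p (X : 'M[R]_(n, p)), A *m (G *m (A *m (A *m X))) = A *m X.
Proof.
move=> hA hG p X.
have h1 : A *m (A *m (G *m (A *m A) - 1%:M)) = 0.
  by rewrite mulmxBr mulmxBr !mulmxA -(mulmxA _ A A) hG mulmx1 subrr.
have := cancel_l hA h1; rewrite mulmxBr mulmx1 => /eqP; rewrite subr_eq0 => /eqP h2.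
by rewrite (mulmxA A A X) (mulmxA G) (mulmxA A) h2.
Qed.

Lemma ginv_r {n} {A G : 'M[R]_n} : A^T = A -> (A *m A) *m G *m (A *m A) = A *m A ->
  forall p (X : 'M[R]_(n, p)), A *m (A *m (G *m (A *m X))) = A *m X.
Proof.
move=> hA hG p X.
have h1 : (A *m A *m G - 1%:M) *m A *m A = 0.
  by rewrite mulmxBl mulmxBl -(mulmxA _ A A) hG !mul1mx subrr.
have := cancel_r hA h1; rewrite mulmxBl mul1mx => /eqP; rewrite subr_eq0 => /eqP h2.
by rewrite !mulmxA h2.
Qed.

Lemma mp_exists n (A : 'M[R]_n) : A^T = A -> exists B : 'M[R]_n,
  [/\ A *m B *m A = A, B *m A *m B = B, (A *m B)^T = A *m B & (B *m A)^T = B *m A].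
Proof.
move=> hA.
set G := pinvmx (A *m A).
have hG : (A *m A) *m G *m (A *m A) = A *m A by apply: mulmxKpV; apply: submx_refl.
clearbody G.
have hGT : (A *m A) *m G^T *m (A *m A) = A *m A.
  by have := congr1 trmx hG; rewrite !trmx_mul !hA !mulmxA.
have L1 := ginv_l hA hG; have L2 := ginv_r hA hG.
have L1T := ginv_l hA hGT.
have L1' : A *m (G *m (A *m A)) = A by have := L1 _ 1%:M; rewrite !mulmx1.
have L1T' : A *m (G^T *m (A *m A)) = A by have := L1T _ 1%:M; rewrite !mulmx1.
have Psym : (A *m (G *m A))^T = A *m (G *m A).
  set D := A *m (G *m A) - A *m (G^T *m A).
  have hDA : D *m A = 0 by rewrite /D mulmxBl -!mulmxA L1' L1T' subrr.
  have hDT : D^T = - D.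
    by rewrite /D linearB /= !trmx_mul !hA trmxK opprB !mulmxA.
  have hD : D = 0.
    apply: mmT_eq0; rewrite hDT mulmxN.
    by rewrite {2}/D mulmxBr !mulmxA hDA !mul0mx subrr oppr0.
  move: hD; rewrite /D => /eqP; rewrite subr_eq0 => /eqP h.
  by rewrite {1}h !trmx_mul trmxK !hA mulmxA.
exists (A *m (G *m (A *m (G *m A)))); split.
- by rewrite -!mulmxA L2 L1'.
- by rewrite -!mulmxA !L1.
- by rewrite -?mulmxA L2 Psym.
- by rewrite -?mulmxA L1' Psym.
Qed.

End MP.

Lemma tomx_mmul n (A B : mat) : tomx n n (mmul n A B) = (tomx n n A *m tomx n n B)%R.
Proof. exact: (tomx_mul n n n A B). Qed.

Lemma pinv_spec n (A : mat) : Defs.symmetric n A -> is_pinv n A (pinv n A).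
Proof.
move=> hs.
have hA : ((tomx n n A)^T = tomx n n A)%R.
  by rewrite -tomx_tr; apply/esym/meq_tomx.
have [Bm [h1 h2 h3 h4]] := mp_exists _ _ hA.
have ex : exists B, is_pinv n A B.
  exists (frommx Bm).
  split; [|split; [|split]]; apply/meq_tomx.
  - rewrite !tomx_mmul tomx_from; exact h1.
  - rewrite !tomx_mmul tomx_from; exact h2.
  - rewrite tomx_tr !tomx_mmul tomx_from; exact h3.
  - rewrite tomx_tr !tomx_mmul tomx_from; exact h4.
exact: (epsilon_spec (inhabits (fun _ _ => 0%Re)) (is_pinv n A) ex).
Qed.
Import GRing.Theory.

Section Q.
Local Open Scope ring_scope.

Definition cv n (x : vec) : 'cV[R]_n := tomx n 1 (fun i _ => x i).

Lemma qform_mx n (x y : vec) (M : mat) :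
  fsum n (fun i => fsum n (fun k => Rmult (Rmult (x i) (M i k)) (y k))) =
  (((cv n x)^T *m tomx n n M *m cv n y) 0 0).
Proof.
rewrite -mulmxA mxE fsum_big; apply: eq_bigr => i _.
rewrite !mxE fsum_big big_distrr; apply: eq_bigr => k _; rewrite !mxE.
exact: Rmult_assoc.
Qed.

Lemma mv_entry m n (M : mat) (x : vec) i (hi : (i < m)%N) :
  fsum n (fun k => Rmult (M i k) (x k)) = (tomx m n M *m cv n x) (Ordinal hi) 0.
Proof. rewrite mxE fsum_big; apply: eq_bigr => k _; by rewrite !mxE. Qed.

Lemma mTm_nonneg n (z : 'cV[R]_n) : Rle 0%Re ((z^T *m z) 0 0).
Proof. rewrite mxE; apply: sum_nonneg => k; rewrite mxE; apply: Rle_0_sqr. Qed.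

Lemma tr11 (M : 'M[R]_1) : M^T 0 0 = M 0 0.
Proof. by rewrite mxE. Qed.

Lemma aux_ineq (x y z w : R) : Rle 0%Re (x - y - (z - w)) -> x = y -> z = y -> Rle x w.
Proof.
move=> h e1 e2. have h' : Rle 0%Re (Rminus (Rminus x y) (Rminus z w)) := h.
move: h'; rewrite e1 e2 => h'. unfold Rminus in h'. lra.
Qed.

Lemma quad_bound n m (Um : 'M[R]_(n, m)) (Am Bm : 'M[R]_n) (y : 'cV[R]_m) :
  Am^T = Am -> Am = Um *m Um^T -> Am *m Bm *m Am = Am -> Um = Am *m (Bm *m Um) ->
  Rle ((((Um *m y)^T *m Bm) *m (Um *m y)) 0 0) ((y^T *m y) 0 0).
Proof.
move=> hA hU h1 hUA.
set cw := Bm *m (Um *m y).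
have hx : Um *m y = Am *m cw by rewrite /cw {1}hUA !mulmxA.
clearbody cw.
set t := Um^T *m cw.
have e1 : ((Um *m y)^T *m Bm) *m (Um *m y) = cw^T *m Am *m cw.
  by rewrite hx trmx_mul hA !mulmxA -(mulmxA _ Am Bm) -(mulmxA _ (Am *m Bm) Am) h1.
have e2 : cw^T *m Am *m cw = t^T *m t.
  by rewrite /t trmx_mul trmxK hU !mulmxA.
have e3 : cw^T *m Am *m cw = t^T *m y.
  by rewrite -mulmxA -hx /t trmx_mul trmxK mulmxA.
have e4 : (t - y)^T *m (t - y) = t^T *m t - t^T *m y - (y^T *m t - y^T *m y).
  by rewrite [(t - y)^T](raddfB (@trmx _ _ _)) mulmxBl !mulmxBr.
have e5 : (y^T *m t) 0 0 = (t^T *m y) 0 0.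
  by rewrite -tr11 trmx_mul trmxK.
rewrite e1 e2.
have h0 := @mTm_nonneg _ (t - y). rewrite e4 in h0.
have E1 : (t^T *m t) 0 0 = (t^T *m y) 0 0 by rewrite -e2 e3.
move: h0 E1 e5. generalize (t^T *m t) (t^T *m y) (y^T *m t) (y^T *m y) => a b c d.
rewrite !mxE.
move=> h0 E1 e5; apply: (aux_ineq _ (b 0 0) (c 0 0)). exact h0. exact E1. exact e5.
Qed.

Lemma mv_entry' m n (M : mat) (x : vec) (i : 'I_m) :
  fsum n (fun k => Rmult (M i k) (x k)) = (tomx m n M *m cv n x) i 0.
Proof. rewrite mxE fsum_big; apply: eq_bigr => k _; by rewrite !mxE. Qed.

Lemma U_range n m (Um : 'M[R]_(n, m)) (Am Bm : 'M[R]_n) :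
  Am^T = Am -> Am = Um *m Um^T -> Am *m Bm *m Am = Am -> Um = Am *m (Bm *m Um).
Proof.
move=> hA hU h1.
have h1T : Am *m Bm^T *m Am = Am.
  by have := congr1 trmx h1; rewrite !trmx_mul hA mulmxA.
have hUc : forall p (X : 'M[R]_(n, p)), Um *m (Um^T *m X) = Am *m X.
  by move=> p X; rewrite mulmxA hU.
have c1 : forall p (X : 'M[R]_(n, p)), Am *m (Bm *m (Am *m X)) = Am *m X.
  by move=> p X; rewrite !mulmxA h1.
have c1T : forall p (X : 'M[R]_(n, p)), Am *m (Bm^T *m (Am *m X)) = Am *m X.
  by move=> p X; rewrite !mulmxA h1T.
have c10 : Am *m (Bm *m Am) = Am by rewrite mulmxA h1.
have c1T0 : Am *m (Bm^T *m Am) = Am by rewrite mulmxA h1T.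
apply/eqP; rewrite -subr_eq0; apply/eqP; apply: mmT_eq0.
rewrite (raddfB (@trmx _ _ _)) /= mulmxBl !mulmxBr !trmx_mul hA -!mulmxA.
by rewrite !hUc -hU c1 !c1T0 c10 !subrr.
Qed.

End Q.
Import GRing.Theory.

Section F.
Local Open Scope ring_scope.

Lemma pinv_mx n (A : mat) : Defs.symmetric n A ->
  tomx n n A *m tomx n n (pinv n A) *m tomx n n A = tomx n n A.
Proof.
move=> hs; have [h _] := pinv_spec _ _ hs.
by move/meq_tomx: h; rewrite !tomx_mmul.
Qed.

Lemma sym_mx n (A : mat) : Defs.symmetric n A -> (tomx n n A)^T = tomx n n A.
Proof. by move=> hs; rewrite -tomx_tr; apply/esym/meq_tomx. Qed.

Lemma lower_tr N P X A : psd N A -> range_incl N P X A -> Rle 0%Re (trXtBX N P X (pinv N A)).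
Proof.
move=> hpsd hr; rewrite /trXtBX; apply: fsum_nonneg => p hp.
have [z hz] := hr (ev p).
have hx : cv N (fun i => X i p) = tomx N N A *m cv N z.
  apply/matrixP => i j; rewrite (ord1 j) -mv_entry' !mxE.
  rewrite -hz; last by apply/ltP.
  by rewrite (fsum_ev_r P p (fun j => X i j)).
have := qform_mx N (fun i => X i p) (fun i => X i p) (pinv N A).
move=> e; rewrite e hx trmx_mul sym_mx; last by case: hpsd.
rewrite mulmxA -!(mulmxA (cv N z)^T) pinv_mx; last by case: hpsd.
rewrite mulmxA -qform_mx.
by case: hpsd => _ h; apply: h.
Qed.

Lemma gram_mx N M U : tomx N N (gram M U) = tomx N M U *m (tomx N M U)^T.
Proof.
apply/matrixP => i k; rewrite !mxE /gram fsum_big; apply: eq_bigr => m _; by rewrite !mxE.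
Qed.

Lemma cv_from n (Zm : 'cV[R]_n) : cv n (fun k => frommx Zm k 0%N) = Zm.
Proof.
apply/matrixP => i j; rewrite (ord1 j).
have := congr1 (fun M : 'cV[R]_n => M i ord0) (tomx_from _ _ Zm).
by rewrite !mxE.
Qed.

Lemma decomp_key N P M X U V :
  (forall i j, (i < N)%coq_nat -> (j < P)%coq_nat -> X i j = fsum M (fun m => Rmult (U i m) (V j m))) ->
  range_incl N P X (gram M U) /\
  Rle (trXtBX N P X (pinv N (gram M U))) (fsum P (fun p => fsum M (fun m => V p m ^ 2)%Re)).
Proof.
move=> hX.
set A := gram M U.
have hs : Defs.symmetric N A by apply: gram_sym.
have hA := sym_mx _ _ hs.
have hU : tomx N N A = tomx N M U *m (tomx N M U)^T by apply: gram_mx.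
have h1 := pinv_mx _ _ hs.
have hUA := U_range _ _ _ _ _ hA hU h1.
have hXm : tomx N P X = tomx N M U *m (tomx P M V)^T.
  apply/matrixP => i j; rewrite !mxE hX; try by apply/ltP.
  by rewrite fsum_big; apply: eq_bigr => m _; rewrite !mxE.
split.
- move=> w.
  set Zm := tomx N N (pinv N A) *m (tomx N M U *m ((tomx P M V)^T *m cv P w)).
  exists (fun k => frommx Zm k 0%N).
  move=> i hi.
  rewrite (mv_entry _ _ _ _ _ (introT ltP hi)) (mv_entry _ _ _ _ _ (introT ltP hi)).
  rewrite cv_from hXm -mulmxA {1}hUA -!mulmxA.
  by [].
- rewrite /trXtBX; apply: fsum_le => p hp.
  have hx : cv N (fun i => X i p) = tomx N M U *m cv M (fun m => V p m).
    apply/matrixP => i j; rewrite (ord1 j) -mv_entry' !mxE hX //; by apply/ltP.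
  rewrite (qform_mx N (fun i => X i p) (fun i => X i p)) hx.
  apply: Rle_trans; first by apply: (quad_bound _ _ _ _ _ _ hA hU h1 hUA).
  right; rewrite mxE fsum_big; apply: eq_bigr => m _; rewrite !mxE /=.
  exact: (Rsqr_pow2 (V p m)).
Qed.

Lemma gram_psd N M U : psd N (gram M U).
Proof.
split; first by apply: gram_sym.
move=> v; rewrite qform_mx gram_mx mulmxA -mulmxA.
have -> : (cv N v)^T *m tomx N M U = ((tomx N M U)^T *m cv N v)^T by rewrite trmx_mul trmxK.
exact: mTm_nonneg.
Qed.

End F.

Open Scope R_scope.

Lemma id_psd N : psd N (fun i j => ev i j).
Proof.
split.
- intros i j hi hj. unfold mtr, ev.
  destruct (Nat.eqb_spec j i) as [e1|n1]; destruct (Nat.eqb_spec i j) as [e2|n2];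
  try reflexivity; exfalso; lia.
- intros v. apply fsum_nonneg; intros i hi.
  assert (E : fsum N (fun j => v i * ev i j * v j) = fsum N (fun j => (v i * v j) * ev i j))
    by (apply fsum_ext; intros; ring).
  rewrite E (fsum_ev_r N i (fun j => v i * v j) hi).
  apply Rle_0_sqr.
Qed.

Lemma id_range N P X : range_incl N P X (fun i j => ev i j).
Proof.
intros w. exists (fun k => fsum P (fun j => X k j * w j)). intros i hi.
symmetry.
assert (E : fsum N (fun k => ev i k * fsum P (fun j => X k j * w j)) = fsum P (fun j => X i j * w j))
  by (apply (fsum_ev_l N i (fun k => fsum P (fun j => X k j * w j))); exact hi).
rewrite <- E. apply fsum_ext; intros; ring.
Qed.

Theorem mainTheorem6 (nu : R) (hnu : 0 <= nu <= 1) (N P : nat) (X : mat) :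
  Dnorm nu N P X >=
  Rinf (fun v => exists A : mat,
          psd N A /\ range_incl N P X A /\
          v = / 2 * Ffun nu N A + / 2 * trXtBX N P X (pinv N A)).
Proof.
set (S := fun v => exists A : mat,
          psd N A /\ range_incl N P X A /\
          v = / 2 * Ffun nu N A + / 2 * trXtBX N P X (pinv N A)).
assert (hinf : is_inf S (Rinf S)).
{ apply Rinf_spec.
  - eexists. exists (fun i j => ev i j). split; [apply id_psd|split; [apply id_range|reflexivity]].
  - exists 0. intros x [A [hA [hr ->]]].
    assert (0 <= Ffun nu N A) by (apply F_nonneg; auto).
    assert (0 <= trXtBX N P X (pinv N A)) by (apply lower_tr; auto).
    lra. }
apply Rle_ge. apply Dnorm_ge.
intros M v [U [V [hX hv]]].
destruct (decomp_key N P M X U V hX) as [hr htr].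
apply Rle_trans with (/ 2 * Ffun nu N (gram M U) + / 2 * trXtBX N P X (pinv N (gram M U))).
- apply hinf. exists (gram M U). split; [apply gram_psd|split; [exact hr|reflexivity]].
- rewrite hv fsum_plus normR_sum.
  assert (hF := F_bound nu N M U hnu). lra.
Qed.
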